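(* Let $\mathrm{Sch}$ be a schema with access methods (possibly result-bounded) and constraints $\Sigma$ consisting of inclusion dependencies, and let $Q$ be a Boolean conjunctive query that is access-determined over $\mathrm{Sch}$. Then $Q$ is access monotonically-determined over $\mathrm{Sch}$.
   Context: An inclusion dependency is a TGD $R(\vec x)\rightarrow\exists\vec y\,S(\vec z)$ with single body and head atoms and no repeated variables. A schema consists of a signature, constraints $\Sigma$, and access methods, each on a relation $R$ with input positions and possibly a result bound $k$. An access $(\mathrm{mt},\mathrm{AccBind})$ on instance $I$ binds the input positions to values of $I$; its matching tuples $M$ are the $R$-tuples agreeing with the binding; a valid output is $J\subseteq M$ with $J=M$ if no bound, and for result bound $k$, $|J|\le k$ and $\forall j\le k$: $|M|\ge j\Rightarrow|J|\ge j$. A valid access selection $\sigma$ maps each access to a valid output. The accessible part $\mathrm{AccPart}(\sigma,I)=\bigcup_i\mathrm{AccPart}_i$, where $\mathrm{AccPart}_0=\mathrm{accessible}_0=\emptyset$, $\mathrm{AccPart}_{i+1}$ is the union of the facts $\sigma(\mathrm{mt},\mathrm{AccBind})$ over all methods and bindings with values in $\mathrm{accessible}_i$, and $\mathrm{accessible}_{i+1}$ is the set of values of $\mathrm{AccPart}_{i+1}$. $Q$ is access monotonically-determined if for all instances $I_1,I_2$ satisfying $\Sigma$ with valid access selections $\sigma_1,\sigma_2$ such that $\mathrm{AccPart}(\sigma_1,I_1)\subseteq\mathrm{AccPart}(\sigma_2,I_2)$, we have $Q(I_1)\subseteq Q(I_2)$. $Q$ is access-determined if for all instances $I_1,I_2$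 satisfying $\Sigma$ with valid access selections $\sigma_1,\sigma_2$ such that $\mathrm{AccPart}(\sigma_1,I_1)=\mathrm{AccPart}(\sigma_2,I_2)$, we have $Q(I_1)=Q(I_2)$. Instances may be finite or infinite. *)

(* Defs.v *)
From Stdlib Require Import List Arith.
Import ListNotations.

Set Implicit Arguments.

(* R(x_0..x_{n-1}) -> exists y, S(z_0..z_{m-1}) is represented by its body
   relation R, its head relation S, and for each head position j either
   [Some i] (z_j is the body variable x_i, i.e. an exported variable) or
   [None] (z_j is an existentially quantified variable).  "No repeated
   variables" means: the map is injective on exported positions and the
   existential variables are pairwise distinct and distinct from body
   variables (the latter is implicit in this encoding). *)
Record ID (Rel : Type) := mkID {
  id_body : Rel;
  id_head : Rel;
  id_map  : nat -> option nat
}.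

Record Schema (V : Type) := mkSchema {
  Rel    : Type;
  ar     : Rel -> nat;
  Mth    : Type;
  mrel   : Mth -> Rel;
  minp   : Mth -> list nat;
  mbound : Mth -> option nat;
  sigma  : list (ID Rel)
}.

Arguments Rel {V}. Arguments ar {V} s _. Arguments Mth {V}.
Arguments mrel {V} s _. Arguments minp {V} s _. Arguments mbound {V} s _.
Arguments sigma {V} s.

Section Defs.
Variable V : Type.
Variable Sc : Schema V.

Definition fact := (Rel Sc * list V)%type.
Definition instance := fact -> Prop.

Definition wf_instance (I : instance) : Prop :=
  forall f, I f -> length (snd f) = ar Sc (fst f).

Definition adom (I : instance) (v : V) : Prop :=
  exists f, I f /\ In v (snd f).

Definition wf_ID (t : ID (Rel Sc)) : Prop :=
  (forall j i, j < ar Sc (id_head t) -> id_map t j = Some i ->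
     i < ar Sc (id_body t)) /\
  (forall j j' i, j < ar Sc (id_head t) -> j' < ar Sc (id_head t) ->
     id_map t j = Some i -> id_map t j' = Some i -> j = j').

Definition sat_ID (I : instance) (t : ID (Rel Sc)) : Prop :=
  forall a, I (id_body t, a) ->
    exists b, I (id_head t, b) /\
      forall j i, j < ar Sc (id_head t) -> id_map t j = Some i ->
        nth_error b j = nth_error a i.

Definition sat_Sigma (I : instance) : Prop :=
  forall t, In t (sigma Sc) -> sat_ID I t.

Definition wf_schema : Prop :=
  (exists l : list (Rel Sc), forall r, In r l) /\
  (exists l : list (Mth Sc), forall m, In m l) /\
  (forall m i, In i (minp Sc m) -> i < ar Sc (mrel Sc m)) /\
  (forall m, NoDup (minp Sc m)) /\
  (forall t, In t (sigma Sc) -> wf_ID t).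

Definition atleast (n : nat) (P : fact -> Prop) : Prop :=
  exists l, NoDup l /\ length l = n /\ forall x, In x l -> P x.
Definition atmost (n : nat) (P : fact -> Prop) : Prop :=
  exists l, length l <= n /\ forall x, P x -> In x l.

(* A binding for method m is the list of values given to the input positions
   [minp Sc m], in that order. *)
Definition binding_ok (m : Mth Sc) (b : list V) : Prop :=
  length b = length (minp Sc m).

Definition matching (I : instance) (m : Mth Sc) (b : list V) : fact -> Prop :=
  fun f => I f /\ fst f = mrel Sc m /\
           map (fun i => nth_error (snd f) i) (minp Sc m) = map (@Some V) b.

Definition valid_output (I : instance) (m : Mth Sc) (b : list V)
    (J : fact -> Prop) : Prop :=
  (forall f, J f -> matching I m b f) /\
  match mbound Sc m with
  | None => forall f, matching I m b f -> J f
  | Some k => atmost k J /\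
      forall j, j <= k -> atleast j (matching I m b) -> atleast j J
  end.

Definition selection := Mth Sc -> list V -> fact -> Prop.

Definition valid_selection (I : instance) (sg : selection) : Prop :=
  forall m b, binding_ok m b -> (forall v, In v b -> adom I v) ->
    valid_output I m b (sg m b).

Fixpoint accpart_i (sg : selection) (i : nat) : fact -> Prop :=
  match i with
  | 0 => fun _ => False
  | S i' => fun f => exists m b, binding_ok m b /\
        (forall v, In v b -> exists g, accpart_i sg i' g /\ In v (snd g)) /\
        sg m b f
  end.

Definition AccPart (sg : selection) : fact -> Prop :=
  fun f => exists i, accpart_i sg i f.

(* atoms over variables (numbered by nat); the query is the existential
   closure of the conjunction of its atoms *)
Definition atom := (Rel Sc * list nat)%type.
Definition BCQ := list atom.

Definition wf_BCQ (Q : BCQ) : Prop :=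
  forall at0, In at0 Q -> length (snd at0) = ar Sc (fst at0).

Definition holds (Q : BCQ) (I : instance) : Prop :=
  exists nu : nat -> V, forall at0, In at0 Q -> I (fst at0, map nu (snd at0)).

Definition access_determined (Q : BCQ) : Prop :=
  forall I1 I2 sg1 sg2,
    wf_instance I1 -> wf_instance I2 -> sat_Sigma I1 -> sat_Sigma I2 ->
    valid_selection I1 sg1 -> valid_selection I2 sg2 ->
    (forall f, AccPart sg1 f <-> AccPart sg2 f) ->
    (holds Q I1 <-> holds Q I2).

Definition access_mon_determined (Q : BCQ) : Prop :=
  forall I1 I2 sg1 sg2,
    wf_instance I1 -> wf_instance I2 -> sat_Sigma I1 -> sat_Sigma I2 ->
    valid_selection I1 sg1 -> valid_selection I2 sg2 ->
    (forall f, AccPart sg1 f -> AccPart sg2 f) ->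
    (holds Q I1 -> holds Q I2).

End Defs.

(* Main.v *)
Require Import Defs.
From Stdlib Require Import List Arith Lia Classical ClassicalEpsilon.
Import ListNotations.

Module MA.
Set Implicit Arguments.

Section Gen.
Variable V : Type.
Variable Sc : Schema V.

Lemma atleast_mono (P : Defs.fact Sc -> Prop) j n : j <= n -> atleast n P -> atleast j P.
Proof.
  intros Hj [l [Hnd [Hl Hin]]]. exists (firstn j l).
  pose proof (firstn_skipn j l) as E.
  split; [|split].
  - rewrite <- E in Hnd. eapply NoDup_app_remove_r; eauto.
  - apply firstn_length_le; lia.
  - intros x Hx. apply Hin. rewrite <- E. apply in_or_app; auto.
Qed.

Lemma atleast_ext (P P' : Defs.fact Sc -> Prop) n : (forall x, P x -> P' x) -> atleast n P -> atleast n P'.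
Proof. intros H [l [A [B C]]]. exists l; auto. Qed.

Lemma fin_or_atleast (P : Defs.fact Sc -> Prop) k :
  atleast k P \/ exists l, NoDup l /\ length l < k /\ forall x, P x <-> In x l.
Proof.
  induction k.
  - left. exists []. simpl. repeat split; auto. constructor. intros x [].
  - destruct IHk as [[l [Hnd [Hl Hin]]] | [l [Hnd [Hl Hin]]]].
    + destruct (classic (exists x, P x /\ ~ In x l)) as [[x [Px Nx]] | Hn].
      * left. exists (x :: l). split; [constructor; auto|split].
        simpl; lia. intros y [<-|Hy]; auto.
      * right. exists l. split; auto. split; [lia|].
        intros x; split; auto. intros Px. apply NNPP. intro N. apply Hn; eauto.
    + right. exists l. repeat split; auto; try lia; apply Hin; auto.
Qed.

Lemma exists_valid_output (I : instance Sc) m b : exists J, valid_output I m b J.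
Proof.
  unfold valid_output. destruct (mbound Sc m) as [k|] eqn:E.
  - destruct (fin_or_atleast (matching I m b) k) as [[l [Hnd [Hl Hin]]] | [l [Hnd [Hl Hin]]]].
    + exists (fun f => In f l). split; auto. split.
      * exists l. split; auto. lia.
      * intros j Hj _. exists (firstn j l).
        pose proof (firstn_skipn j l) as E'.
        split; [|split].
        -- rewrite <- E' in Hnd. eapply NoDup_app_remove_r; eauto.
        -- apply firstn_length_le; lia.
        -- intros x Hx. rewrite <- E'. apply in_or_app; auto.
    + exists (matching I m b). split; auto. split; auto.
      exists l. split; [lia|]. intros x; apply Hin.
  - exists (matching I m b). split; auto.
Qed.

Lemma accpart_S (sg : selection Sc) i f : accpart_i sg i f -> accpart_i sg (S i) f.
Proof.
  revert f; induction i; intros f H; simpl in *; [contradiction|].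
  destruct H as [m [b [Hb [Hv Hs]]]]. exists m, b. split; auto. split; auto.
  intros v Hin. destruct (Hv v Hin) as [g [Hg Hg']]. exists g; auto.
Qed.

Lemma accpart_le (sg : selection Sc) i j f : i <= j -> accpart_i sg i f -> accpart_i sg j f.
Proof. induction 1; auto. intros; apply accpart_S; auto. Qed.

Lemma accpart_common (sg : selection Sc) (b : list V) :
  (forall v, In v b -> exists g, AccPart sg g /\ In v (snd g)) ->
  exists N, forall v, In v b -> exists g, accpart_i sg N g /\ In v (snd g).
Proof.
  induction b as [|a b IH]; intros H.
  - exists 0. intros v [].
  - destruct IH as [N HN]. { intros v Hv; apply H; simpl; auto. }
    destruct (H a (or_introl eq_refl)) as [g [[i Hi] Hg]].
    exists (N + i). intros v [<-|Hv].
    + exists g. split; auto. eapply accpart_le; [|eauto]; lia.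
    + destruct (HN v Hv) as [g' [Hg1 Hg2]]. exists g'. split; auto.
      eapply accpart_le; [|eauto]; lia.
Qed.

Lemma accpart_in (I : instance Sc) sg : valid_selection I sg ->
  forall i f, accpart_i sg i f -> I f.
Proof.
  intros Hv i. induction i; intros f H; simpl in H; [contradiction|].
  destruct H as [m [b [Hb [Hvv Hs]]]].
  assert (Hd : forall v, In v b -> adom I v).
  { intros v Hin. destruct (Hvv v Hin) as [g [Hg Hg']]. exists g; auto. }
  destruct (Hv m b Hb Hd) as [H1 _]. apply H1; auto.
Qed.

End Gen.

End MA.
Import MA.


Section Main.
Variable V : Type.
Variable Sc : Schema V.
Variables (I1 I2 : instance Sc) (sg1 sg2 : selection Sc) (c : V).
Hypotheses (wf1 : wf_instance I1) (wf2 : wf_instance I2)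
  (s1 : sat_Sigma I1) (s2 : sat_Sigma I2)
  (v1 : valid_selection I1 sg1) (v2 : valid_selection I2 sg2)
  (inc : forall f, AccPart sg1 f -> AccPart sg2 f).

Definition acc (sg : selection Sc) v := exists g, AccPart sg g /\ In v (snd g).
Hypothesis c_fresh : ~ acc sg2 c.

Definition h (v : V) : V := if excluded_middle_informative (acc sg1 v) then v else c.
Definition hf (f : Defs.fact Sc) : Defs.fact Sc := (fst f, map h (snd f)).
Definition J1 : instance Sc := fun f => I2 f \/ exists f0, I1 f0 /\ f = hf f0.

Lemma hf_acc f : AccPart sg1 f -> hf f = f.
Proof.
  intros H. destruct f as [r a]. unfold hf; simpl. f_equal.
  rewrite <- (map_id a) at 2. apply map_ext_in. intros v Hv.
  unfold h. destruct (excluded_middle_informative (acc sg1 v)) as [_|N]; auto.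
  exfalso; apply N. exists (r, a); auto.
Qed.

Lemma J1_wf : wf_instance J1.
Proof.
  intros f [H|[f0 [H ->]]]; auto. unfold hf; simpl. rewrite length_map. apply wf1; auto.
Qed.

Lemma J1_sat : sat_Sigma J1.
Proof.
  intros t Ht a [H|[f0 [H E]]].
  - destruct (s2 t Ht a H) as [b [Hb Hb']]. exists b. split; auto. left; auto.
  - destruct f0 as [r a0]. unfold hf in E; simpl in E. injection E as E1 E2; subst r a.
    destruct (s1 t Ht a0 H) as [b [Hb Hb']]. exists (map h b). split.
    + right. exists (id_head t, b). split; auto.
    + intros j i Hj Hi. rewrite !nth_error_map, (Hb' j i Hj Hi). auto.
Qed.

Lemma J1_holds Q : holds Q I1 -> holds Q J1.
Proof.
  intros [nu Hnu]. exists (fun x => h (nu x)). intros at0 Hat. right.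
  exists (fst at0, map nu (snd at0)). split; auto. unfold hf; simpl. rewrite map_map; auto.
Qed.

Lemma acc_adom sg I (Hv : valid_selection I sg) v : acc sg v -> adom I v.
Proof. intros [g [[i Hg] Hin]]. exists g. split; auto. eapply accpart_in; eauto. Qed.

Lemma match_back m b f0 :
  (forall v, In v b -> acc sg2 v) -> I1 f0 -> matching J1 m b (hf f0) ->
  matching I1 m b f0 /\ (forall v, In v b -> acc sg1 v).
Proof.
  intros Hb H0 [_ [Hr Hm]]. destruct f0 as [r a]. unfold hf in *; simpl in *.
  assert (K : forall i, In i (minp Sc m) -> forall v, nth_error (map h a) i = Some v ->
     acc sg1 v /\ nth_error a i = Some v).
  { intros i Hi v Hv. rewrite nth_error_map in Hv.
    destruct (nth_error a i) as [u|] eqn:Eu; simpl in Hv; [|discriminate].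
    injection Hv as <-. unfold h in *.
    destruct (excluded_middle_informative (acc sg1 u)) as [Ha|Na]; [split; auto|].
    exfalso. apply c_fresh. apply Hb.
    assert (In (Some c) (map Some b)).
    { rewrite <- Hm. apply in_map_iff. exists i. rewrite nth_error_map, Eu. split; auto. simpl. destruct (excluded_middle_informative (acc sg1 u)); [contradiction|auto]. }
    apply in_map_iff in H as [x [Ex Hx]]. injection Ex as ->. auto. }
  assert (Hm' : map (fun i => nth_error a i) (minp Sc m) = map Some b).
  { rewrite <- Hm. apply map_ext_in. intros i Hi.
    destruct (nth_error (map h a) i) as [v|] eqn:Ev.
    - destruct (K i Hi v Ev) as [_ ->]; auto.
    - rewrite nth_error_map in Ev. destruct (nth_error a i); auto; discriminate. }
  split.
  - split; auto.
  - intros v Hv. assert (In (Some v) (map Some b)) by (apply in_map; auto).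
    rewrite <- Hm in H. apply in_map_iff in H as [i [Ei Hi]].
    destruct (K i Hi v Ei); auto.
Qed.


Lemma J1_cases m b f : (forall v, In v b -> acc sg2 v) -> matching J1 m b f ->
  matching I2 m b f \/ exists f0, f = hf f0 /\ matching I1 m b f0 /\ (forall v, In v b -> acc sg1 v).
Proof.
  intros Hb Hm. destruct Hm as [[H|[f0 [H0 ->]]] Hr].
  - left. split; auto.
  - right. exists f0. split; auto. apply match_back; auto. split; auto. right; eauto.
Qed.

Lemma sg1_acc m b f0 : binding_ok Sc m b -> (forall v, In v b -> acc sg1 v) -> sg1 m b f0 ->
  AccPart sg1 f0.
Proof.
  intros Hok Hb Hs. edestruct accpart_common as [N HN]; [exact Hb|].
  exists (S N). simpl. exists m, b. auto.
Qed.

Lemma acc1_I2 m b f0 : matching I1 m b f0 -> AccPart sg1 f0 -> matching I2 m b (hf f0).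
Proof.
  intros [_ [Hr Hm]] Ha. rewrite hf_acc; auto. split; auto.
  destruct (inc _ Ha) as [i Hi]. eapply accpart_in; eauto.
Qed.

Lemma in_sg1 m b f0 : binding_ok Sc m b -> (forall v, In v b -> acc sg1 v) ->
  (mbound Sc m = None \/ exists k, mbound Sc m = Some k /\ ~ atleast k (matching I1 m b)) ->
  matching I1 m b f0 -> sg1 m b f0.
Proof.
  intros Hok Hb Hc Hm.
  assert (Hd : forall v, In v b -> adom I1 v) by (intros; eapply acc_adom; eauto).
  destruct (v1 m b Hok Hd) as [V1 V2].
  destruct Hc as [E|[k [E Hn]]]; rewrite E in V2; auto.
  destruct V2 as [_ V2].
  destruct (fin_or_atleast (matching I1 m b) k) as [A|[l [Hnd [Hl Hin]]]]; [contradiction|].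
  destruct (V2 (length l)) as [l' [Hnd' [Hl' Hin']]]; [lia| exists l; split; auto; split; auto; intros; apply Hin; auto|].
  assert (incl l l').
  { apply NoDup_length_incl; auto. lia. intros x Hx. apply Hin. apply V1. auto. }
  apply Hin'. apply H. apply Hin. auto.
Qed.

Lemma valid_acc m b : binding_ok Sc m b -> (forall v, In v b -> acc sg2 v) ->
  valid_output J1 m b (sg2 m b).
Proof.
  intros Hok Hb.
  assert (Hd : forall v, In v b -> adom I2 v) by (intros; eapply acc_adom; eauto).
  destruct (v2 m b Hok Hd) as [V1 V2]. split.
  { intros f Hf. destruct (V1 f Hf) as [A [B C]]. split; auto. left; auto. }
  destruct (mbound Sc m) as [k|] eqn:E.
  - destruct V2 as [V2 V3]. split; auto. intros j Hj Hat. apply V3; auto.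
    destruct (classic (forall v, In v b -> acc sg1 v)) as [Hb1|Hb1].
    + destruct (classic (atleast k (matching I1 m b))) as [Hk|Hk].
      * destruct (v1 m b Hok (fun v H => acc_adom _ _ v1 _ (Hb1 v H))) as [W1 W2].
        rewrite E in W2. destruct W2 as [_ W2].
        apply (atleast_mono (P := matching I2 m b) Hj).
        apply (atleast_ext (P := sg1 m b)); [|apply W2; auto].
        intros f Hf. rewrite <- (hf_acc _ (sg1_acc _ _ _ Hok Hb1 Hf)). apply acc1_I2; auto.
        apply sg1_acc with m b; auto.
      * apply (atleast_ext (P := matching J1 m b)); auto.
        intros f Hf. destruct (J1_cases _ _ _ Hb Hf) as [H|[f0 [-> [Hm _]]]]; auto.
        apply acc1_I2; auto. apply sg1_acc with m b; auto.
        apply in_sg1; eauto.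
    + apply (atleast_ext (P := matching J1 m b)); auto.
      intros f Hf. destruct (J1_cases _ _ _ Hb Hf) as [H|[f0 [-> [Hm Hb2]]]]; auto. contradiction.
  - intros f Hf. apply V2. destruct (J1_cases _ _ _ Hb Hf) as [H|[f0 [-> [Hm Hb2]]]]; auto.
    apply acc1_I2; auto. apply sg1_acc with m b; auto. apply in_sg1; auto.
Qed.


Lemma sel_ex m b : exists J, valid_output J1 m b J /\
  (binding_ok Sc m b -> (forall v, In v b -> acc sg2 v) -> J = sg2 m b).
Proof.
  destruct (classic (binding_ok Sc m b /\ forall v, In v b -> acc sg2 v)) as [[Hok Hb]|N].
  - exists (sg2 m b). split; auto. apply valid_acc; auto.
  - destruct (exists_valid_output J1 m b) as [J HJ]. exists J. split; auto.
    intros; exfalso; auto.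
Qed.

Definition sg' : selection Sc := fun m b =>
  proj1_sig (constructive_indefinite_description _ (sel_ex m b)).

Lemma sg'_spec m b : valid_output J1 m b (sg' m b) /\
  (binding_ok Sc m b -> (forall v, In v b -> acc sg2 v) -> sg' m b = sg2 m b).
Proof. unfold sg'. destruct (constructive_indefinite_description _ (sel_ex m b)); auto. Qed.

Lemma sg'_valid : valid_selection J1 sg'.
Proof. intros m b _ _. apply sg'_spec. Qed.

Lemma sg'_stage i f : accpart_i sg' i f <-> accpart_i sg2 i f.
Proof.
  revert f; induction i; intros f; simpl; [tauto|].
  split; intros [m [b [Hok [Hv Hs]]]]; exists m, b; split; auto.
  - assert (Hb : forall v, In v b -> exists g, accpart_i sg2 i g /\ In v (snd g)).
    { intros v Hin. destruct (Hv v Hin) as [g [Hg Hg']]. exists g. split; auto. apply IHi; auto. }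
    split; auto. rewrite <- (proj2 (sg'_spec m b)); auto.
    intros v Hin. destruct (Hb v Hin) as [g [Hg Hg']]. exists g. split; auto. exists i; auto.
  - split.
    + intros v Hin. destruct (Hv v Hin) as [g [Hg Hg']]. exists g. split; auto. apply IHi; auto.
    + rewrite (proj2 (sg'_spec m b)); auto.
      intros v Hin. destruct (Hv v Hin) as [g [Hg Hg']]. exists g. split; auto. exists i; auto.
Qed.

Lemma main_mon (Q : BCQ Sc) : access_determined Q -> holds Q I1 -> holds Q I2.
Proof.
  intros AD HQ. apply (AD J1 I2 sg' sg2 J1_wf wf2 J1_sat s2 sg'_valid v2).
  - intros f; split; intros [i Hi]; exists i; apply sg'_stage; auto.
  - apply J1_holds; auto.
Qed.

End Main.

Module MC.
Set Implicit Arguments.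

Lemma map_inj_left {A B} (f : A -> B) (g : B -> A) (l1 l2 : list A) :
  (forall x, g (f x) = x) -> map f l1 = map f l2 -> l1 = l2.
Proof.
  intros H E. apply (f_equal (map g)) in E. rewrite !map_map in E.
  rewrite !(map_ext (fun x => g (f x)) id H), !map_id in E. auto.
Qed.

Section Tr.
Variable V : Type.
Variable Sc : Schema V.
Variables (e d : V -> V).
Hypothesis ed : forall v, d (e v) = v.

Definition fe (f : Defs.fact Sc) : Defs.fact Sc := (fst f, map e (snd f)).
Definition fd (f : Defs.fact Sc) : Defs.fact Sc := (fst f, map d (snd f)).
Definition img (P : Defs.fact Sc -> Prop) : Defs.fact Sc -> Prop :=
  fun f => exists a, P (fst f, a) /\ snd f = map e a.

Lemma mde (a : list V) : map d (map e a) = a.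
Proof. rewrite map_map. rewrite (map_ext _ id ed). apply map_id. Qed.

Lemma fd_fe f : fd (fe f) = f.
Proof. destruct f; unfold fd, fe; simpl. rewrite mde; auto. Qed.

Lemma img_fe (P : Defs.fact Sc -> Prop) f : P f -> img P (fe f).
Proof. destruct f as [r a]; intros H. exists a; auto. Qed.

Lemma img_inv (P : Defs.fact Sc -> Prop) f : img P f -> P (fd f) /\ f = fe (fd f).
Proof.
  destruct f as [r a']; intros [a [H E]]; simpl in *. subst a'.
  unfold fd, fe; simpl. rewrite mde. auto.
Qed.

Lemma img_mono (P P' : Defs.fact Sc -> Prop) f : (forall x, P x -> P' x) -> img P f -> img P' f.
Proof. intros H [a [A B]]; exists a; auto. Qed.

Lemma atmost_img k P : atmost k P -> atmost k (img P).
Proof.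
  intros [l [Hl Hin]]. exists (map fe l). rewrite length_map. split; auto.
  intros x Hx. destruct (img_inv Hx) as [H E]. rewrite E. apply in_map; auto.
Qed.

Lemma atleast_img k P : atleast k P -> atleast k (img P).
Proof.
  intros [l [Hnd [Hl Hin]]]. exists (map fe l). rewrite length_map. split; [|split; auto].
  - apply NoDup_map_NoDup_ForallPairs; auto. intros x y _ _ E.
    rewrite <- (fd_fe x), <- (fd_fe y), E; auto.
  - intros x Hx. apply in_map_iff in Hx as [y [<- Hy]]. apply img_fe; auto.
Qed.

Lemma atleast_img_inv k P : atleast k (img P) -> atleast k P.
Proof.
  intros [l [Hnd [Hl Hin]]]. exists (map fd l). rewrite length_map. split; [|split; auto].
  - apply (NoDup_map_inv fe). rewrite map_map.
    rewrite (map_ext_in _ id); [rewrite map_id; auto|].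
    intros x Hx. destruct (img_inv (Hin x Hx)) as [_ E]; auto.
  - intros x Hx. apply in_map_iff in Hx as [y [<- Hy]]. apply img_inv; auto.
Qed.

Definition Ie (I : instance Sc) : instance Sc := img I.
Definition sge (sg : selection Sc) : selection Sc := fun m b => img (sg m (map d b)).

Lemma sel_eq (a b0 : list V) (l : list nat) :
  map (fun i => nth_error (map e a) i) l = map Some (map e b0) <->
  map (fun i => nth_error a i) l = map Some b0.
Proof.
  assert (E1 : map (fun i => nth_error (map e a) i) l = map (option_map e) (map (fun i => nth_error a i) l)).
  { rewrite map_map. apply map_ext. intros; apply nth_error_map. }
  assert (E2 : map Some (map e b0) = map (option_map e) (map Some b0)).
  { rewrite !map_map. auto. }
  rewrite E1, E2. split; intros H.
  - apply map_inj_left with (g := option_map d) in H; auto.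
    intros [x|]; simpl; rewrite ?ed; auto.
  - rewrite H; auto.
Qed.

Lemma matching_img I m b0 f : matching (Ie I) m (map e b0) f <-> img (matching I m b0) f.
Proof.
  destruct f as [r a']. split.
  - intros [[a [H E]] [Hr Hm]]. simpl in *. subst a'. exists a. simpl.
    split; [|reflexivity]. split; [exact H|]. split; [exact Hr|]. apply (proj1 (sel_eq _ _ _)); exact Hm.
  - intros [a [[H [Hr Hm]] E]]. simpl in *. subst a'. split; [exists a; auto|].
    split; [exact Hr|]. simpl. apply (proj2 (sel_eq _ _ _)); exact Hm.
Qed.

Lemma adom_img I v : adom (Ie I) v -> exists u, adom I u /\ v = e u.
Proof.
  intros [f [[a [H E]] Hin]]. rewrite E in Hin. apply in_map_iff in Hin as [u [<- Hu]].
  exists u. split; auto. exists (fst f, a). auto.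
Qed.

Lemma valid_img I sg : valid_selection I sg -> valid_selection (Ie I) (sge sg).
Proof.
  intros Hv m b Hok Hd.
  assert (Eb : b = map e (map d b)).
  { rewrite map_map. rewrite <- (map_id b) at 1. apply map_ext_in. intros v Hin.
    destruct (adom_img (Hd v Hin)) as [u [_ ->]]. rewrite ed; auto. }
  assert (Hok' : binding_ok Sc m (map d b)) by (unfold binding_ok in *; rewrite length_map; auto).
  assert (Hd' : forall v, In v (map d b) -> adom I v).
  { intros v Hin. apply in_map_iff in Hin as [w [<- Hw]].
    destruct (adom_img (Hd w Hw)) as [u [Hu ->]]. rewrite ed; auto. }
  destruct (Hv m (map d b) Hok' Hd') as [V1 V2].
  unfold sge. rewrite Eb at 1. split.
  - intros f Hf. apply matching_img. eapply img_mono; [|exact Hf]. auto.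
  - destruct (mbound Sc m) as [k|].
    + destruct V2 as [V2 V3]. split; [apply atmost_img; auto|].
      intros j Hj Hat. apply atleast_img. apply V3; auto.
      apply atleast_img_inv. eapply atleast_ext; [|exact Hat].
      intros x Hx. apply matching_img; auto.
    + intros f Hf. apply matching_img in Hf. eapply img_mono; [|exact Hf]. auto.
Qed.

Lemma stage_img sg i f : accpart_i (sge sg) i f <-> img (accpart_i sg i) f.
Proof.
  revert f; induction i; intros f.
  - simpl. split; [contradiction|]. intros [a [[] _]].
  - simpl. split.
    + intros [m [b [Hok [Hv [a [Hs E]]]]]]. exists a. split; auto.
      exists m, (map d b). split; [unfold binding_ok in *; rewrite length_map; auto|]. split; auto.
      intros v Hin. apply in_map_iff in Hin as [w [<- Hw]].
      destruct (Hv w Hw) as [g [Hg Hin]]. apply IHi in Hg.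
      destruct (img_inv Hg) as [Hg1 Eg]. exists (fd g). split; auto.
      rewrite Eg in Hin. unfold fe in Hin; simpl in Hin.
      apply in_map_iff in Hin as [u [<- Hu]]. rewrite ed. auto.
    + intros [a [[m [b0 [Hok [Hv Hs]]]] E]]. exists m, (map e b0).
      split; [unfold binding_ok in *; rewrite length_map; auto|]. split.
      * intros v Hin. apply in_map_iff in Hin as [u [<- Hu]].
        destruct (Hv u Hu) as [g [Hg Hin]]. exists (fe g). split.
        -- apply IHi. apply img_fe; auto.
        -- apply in_map; auto.
      * exists a. rewrite mde. auto.
Qed.

Lemma AccPart_img sg f : AccPart (sge sg) f <-> img (AccPart sg) f.
Proof.
  split.
  - intros [i Hi]. apply stage_img in Hi. eapply img_mono; [|exact Hi]. intros; exists i; auto.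
  - intros [a [[i Hi] E]]. exists i. apply stage_img. exists a; auto.
Qed.

Lemma wf_img I : wf_instance I -> wf_instance (Ie I).
Proof. intros H f [a [Hf E]]. rewrite E, length_map. apply (H _ Hf). Qed.

Lemma sat_img I : sat_Sigma I -> sat_Sigma (Ie I).
Proof.
  intros H t Ht a' [a [Hf E]]. simpl in *. subst a'.
  destruct (H t Ht a Hf) as [b [Hb Hb']]. exists (map e b). split.
  - exists b; auto.
  - intros j i Hj Hi. rewrite !nth_error_map, (Hb' j i Hj Hi). auto.
Qed.

Lemma holds_img Q I : holds Q I <-> holds Q (Ie I).
Proof.
  split.
  - intros [nu Hnu]. exists (fun x => e (nu x)). intros at0 Hat.
    exists (map nu (snd at0)). split; [apply Hnu; auto|]. simpl. rewrite map_map; auto.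
  - intros [nu Hnu]. exists (fun x => d (nu x)). intros at0 Hat.
    destruct (Hnu at0 Hat) as [a [Ha E]]. simpl in *.
    rewrite <- map_map, E, mde. auto.
Qed.

End Tr.

End MC.
Import MC.


Section G.
Variable V : Type.
Variable g : nat -> V.
Hypothesis Hg : forall x y, g x = g y -> x = y.

Definition ginv (v : V) : option nat :=
  match excluded_middle_informative (exists n, g n = v) with
  | left H => Some (proj1_sig (constructive_indefinite_description _ H))
  | right _ => None
  end.

Lemma ginv_some v n : ginv v = Some n -> g n = v.
Proof.
  unfold ginv. destruct (excluded_middle_informative _) as [H|H]; [|discriminate].
  intros E; injection E as <-. destruct (constructive_indefinite_description _ H); auto.
Qed.

Lemma ginv_none v : ginv v = None -> forall n, g n <> v.
Proof.
  unfold ginv. destruct (excluded_middle_informative _) as [H|H]; [discriminate|].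
  intros _ n E. apply H; eauto.
Qed.

Definition ee (v : V) : V := match ginv v with Some n => g (2 * n) | None => v end.
Definition dd (v : V) : V := match ginv v with Some n => g (Nat.div2 n) | None => v end.

Lemma dd_ee v : dd (ee v) = v.
Proof.
  unfold ee. destruct (ginv v) as [n|] eqn:E.
  - apply ginv_some in E. unfold dd. destruct (ginv (g (2 * n))) as [m|] eqn:E'.
    + apply ginv_some in E'. apply Hg in E'. subst m. rewrite Nat.div2_double. auto.
    + exfalso. exact (ginv_none _ E' (2 * n) eq_refl).
  - unfold dd. rewrite E. auto.
Qed.

Lemma ee_not v : ee v <> g 1.
Proof.
  unfold ee. destruct (ginv v) as [n|] eqn:E.
  - intros H. apply Hg in H. lia.
  - intros H. exact (ginv_none _ E 1 (eq_sym H)).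
Qed.
End G.

Theorem mainTheorem14 (V : Type)
  (Vinf : exists g : nat -> V, forall x y, g x = g y -> x = y)
  (Sch : Schema V) (Q : BCQ Sch) :
  wf_schema Sch -> wf_BCQ Q ->
  access_determined Q -> access_mon_determined Q.
Proof.
  intros _ _ AD I1 I2 sg1 sg2 wf1 wf2 s1 s2 v1 v2 Hinc HQ.
  destruct Vinf as [g Hg].
  pose proof (dd_ee _ _ Hg) as ed.
  set (e := ee V g) in *. set (d := dd V g) in *.
  apply (proj2 (holds_img e d ed Q I2)).
  apply (main_mon V Sch (Ie e I1) (Ie e I2) (sge e d sg1) (sge e d sg2) (g 1)
           (wf_img wf1) (wf_img wf2) (sat_img s1) (sat_img s2)
           (valid_img d ed v1) (valid_img d ed v2)); auto.
  - intros f Hf. apply (AccPart_img e d ed). apply (AccPart_img e d ed) in Hf.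
    destruct Hf as [a [Ha E]]. exists a; auto.
  - intros [f [Hf Hin]]. apply (AccPart_img e d ed) in Hf. destruct Hf as [a [_ E]].
    rewrite E in Hin. apply in_map_iff in Hin as [u [Eu _]].
    exact (ee_not _ _ Hg u Eu).
  - apply (proj1 (holds_img e d ed Q I1)). auto.
Qed.
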